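(* For every positive integer $s$, $K_{3}^{RT}(3,s,3s-2)\le 5$.
   Context: For positive integers $m,s$, the RT poset $[m\times s]$ is the set $\{1,\ldots,ms\}$ partitioned into $m$ blocks $B_i=\{is+1,\ldots,(i+1)s\}$; each block is a chain under the usual order of the integers, and elements of different blocks are incomparable. An ideal is a down-closed subset; $\langle A\rangle$ denotes the smallest ideal containing $A$. For $x,y\in\mathbb{Z}_q^{ms}$, $d_{RT}(x,y)=|\langle\{i:x_i\neq y_i\}\rangle|$. A code $C\subseteq \mathbb{Z}_q^{ms}$ is an $R$-covering if every $x\in\mathbb{Z}_q^{ms}$ has some $c\in C$ with $d_{RT}(x,c)\le R$; $K_q^{RT}(m,s,R)$ is the smallest size of an $R$-covering. *)

(* Defs.v *)
From mathcomp Require Import all_boot.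
Set Implicit Arguments. Unset Strict Implicit. Unset Printing Implicit Defensive.

(* Positions of the RT poset [m x s] are 'I_(m*s), i.e. 0..ms-1 (0-indexed
   version of 1..ms); position k lies in block k %/ s. *)
Definition rt_le (s : nat) (j k : nat) : bool := (j %/ s == k %/ s) && (j <= k).

(* Alphabet Z_q represented by 'I_q (only equality of symbols matters). *)
Definition word (q m s : nat) := {ffun 'I_(m * s) -> 'I_q}.

Definition rt_ideal (m s : nat) (A : {set 'I_(m * s)}) : {set 'I_(m * s)} :=
  [set j : 'I_(m * s) | [exists k in A, rt_le s j k]].

Definition d_RT (q m s : nat) (x y : word q m s) : nat :=
  #|rt_ideal [set i | x i != y i]|.

Definition is_covering (q m s R : nat) (C : {set word q m s}) : bool :=
  [forall x : word q m s, [exists c in C, d_RT x c <= R]].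

Definition has_covering_of_size (q m s R n : nat) : bool :=
  [exists C : {set word q m s}, (#|C| == n) && is_covering R C].

Lemma has_covering_ex (q m s R : nat) : exists n, has_covering_of_size q m s R n.
Proof.
exists #|[set: word q m s]|; apply/existsP; exists [set: word q m s].
rewrite eqxx /=; apply/forallP => x; apply/existsP; exists x.
rewrite in_setT /= /d_RT.
have -> : [set i | x i != x i] = set0 by apply/setP => i; rewrite !inE eqxx.
have -> : rt_ideal (m:=m) (s:=s) set0 = set0.
  by apply/setP => j; rewrite !inE; apply/existsP => -[k]; rewrite inE.
by rewrite cards0.
Qed.

Definition K_RT (q m s R : nat) : nat := ex_minn (has_covering_ex q m s R).

(* Main.v *)
Require Import Defs.
From mathcomp Require Import all_boot.
From mathcomp Require Import zify.

Definition table : seq (seq nat) :=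
  [:: [:: 0; 0; 0]; [:: 0; 1; 1]; [:: 1; 0; 1]; [:: 1; 1; 0]; [:: 2; 2; 2]].

Definition tabn (k b : nat) : nat := nth 0 (nth [::] table k) b %% 3.

Definition cov (a b c : nat) : bool :=
  has (fun k => has (fun j => all (fun i => (i == j) || (tabn k i == nth 0 [:: a; b; c] i))
     (iota 0 3)) (iota 0 3)) (iota 0 5).

Lemma cover_nat a b c : a < 3 -> b < 3 -> c < 3 -> cov a b c.
Proof.
by case: a => [|[|[|a]]] //; case: b => [|[|[|b]]] //; case: c => [|[|[|c]]].
Qed.

Lemma inj_nat k1 k2 : k1 < 5 -> k2 < 5 ->
  all (fun i => tabn k1 i == tabn k2 i) (iota 0 3) -> k1 == k2.
Proof.
by case: k1 => [|[|[|[|[|k1]]]]] //; case: k2 => [|[|[|[|[|k2]]]]].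
Qed.

Section S.
Variable s : nat.
Hypothesis Hs : 0 < s.

Lemma top_lt (b : 'I_3) : b * s + s.-1 < 3 * s.
Proof. have := ltn_ord b. nia. Qed.

Definition top (b : 'I_3) : 'I_(3 * s) := Ordinal (top_lt b).

Definition cw (v : 'I_3 -> 'I_3) : word 3 3 s :=
  [ffun i : 'I_(3 * s) => if i %% s == s.-1 then v (inord (i %/ s)) else ord0].

Lemma top_div (b : 'I_3) : (b * s + s.-1) %/ s = b.
Proof.
rewrite divnDl ?dvdn_mull // mulnK // divn_small ?addn0 //. lia.
Qed.

Lemma top_mod (b : 'I_3) : (b * s + s.-1) %% s = s.-1.
Proof. rewrite modnMDl modn_small //. lia. Qed.

Lemma cw_top v b : cw v (top b) = v b.
Proof.
rewrite /cw ffunE /= top_mod eqxx top_div.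
by congr v; apply: val_inj; rewrite /= inordK.
Qed.

Lemma top_inj : injective top.
Proof.
move=> b1 b2 /(congr1 val) /= E.
have := congr1 (fun n => n %/ s) E; rewrite /= !top_div => E'.
exact: val_inj.
Qed.

Lemma top_max (k : 'I_(3 * s)) (b : 'I_3) : k %/ s = b -> top b <= k -> k = top b.
Proof.
move=> Hd Hle; apply: val_inj => /=; move: Hle => /=.
have := divn_eq k s. have := ltn_pmod k Hs. rewrite Hd. lia.
Qed.

Lemma key (x c : word 3 3 s) (j : 'I_3) :
  (forall b, b != j -> x (top b) = c (top b)) -> d_RT x c <= 3 * s - 2.
Proof.
move=> agree.
have sub : rt_ideal [set i | x i != c i] \subset ~: [set top b | b in ~: [set j]].
  apply/subsetP => i; rewrite !inE => /existsP [k /andP [Hk Hjk]].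
  rewrite inE in Hk.
  apply/imsetP => -[b]; rewrite !inE => nb Ei.
  move: Hjk; rewrite /rt_le Ei /= top_div => /andP [/eqP Hd Hle].
  have Ek := @top_max k b (esym Hd) Hle.
  by rewrite Ek agree ?eqxx in Hk.
rewrite /d_RT; apply: (leq_trans (subset_leq_card sub)).
have := cardsC [set top b | b in ~: [set j]].
rewrite card_imset; last exact: top_inj.
rewrite cardsC1 !card_ord. move=> H; rewrite [3.-1]/= in H. move: H. set z := #|_|. move=> H. lia.
Qed.

End S.

Theorem corollary4 (s : nat) : 0 < s -> K_RT 3 3 s (3 * s - 2) <= 5.
Proof.
move=> Hs.
pose tab (k : nat) (b : 'I_3) : 'I_3 := Ordinal (ltn_pmod (nth 0 (nth [::] table k) b) (isT : 0 < 3)).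
rewrite /K_RT; case: ex_minnP => n _ Hmin; apply: Hmin.
apply/existsP; exists [set cw s (tab k) | k : 'I_5].
apply/andP; split.
  rewrite card_imset ?card_ord //.
  move=> k1 k2 E; apply/eqP; rewrite -val_eqE /=.
  apply: inj_nat => //.
  apply/allP => i; rewrite mem_iota /= add0n => Hi.
  have := congr1 (fun w : word 3 3 s => val (w (top s Hs (Ordinal Hi)))) E.
  by rewrite /= !(cw_top s Hs) /tabn /= => ->.
apply/forallP => x.
have := cover_nat _ _ _ (ltn_ord (x (top s Hs ord0))) (ltn_ord (x (top s Hs (inord 1))))
   (ltn_ord (x (top s Hs (inord 2)))).
rewrite /cov => /hasP [k]; rewrite mem_iota add0n => /andP [_ Hk] /hasP [j].
rewrite mem_iota add0n => /andP [_ Hj] /allP Hall.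
apply/existsP; exists (cw s (tab k)).
apply/andP; split; first by apply/imsetP; exists (Ordinal Hk).
apply: (key s Hs x _ (Ordinal Hj)) => b nb.
apply/val_inj; rewrite (cw_top s Hs) /=.
have := Hall b; rewrite mem_iota add0n ltn_ord leq0n => /(_ isT).
rewrite -val_eqE /= in nb; rewrite (negbTE nb) /= => /eqP; rewrite /tabn => ->.
case: b nb => [[|[|[|b]]] Hb] //= _.
- by congr (nat_of_ord (x _)); apply: val_inj.
- by congr (nat_of_ord (x _)); apply: val_inj; rewrite /= inordK.
- by congr (nat_of_ord (x _)); apply: val_inj; rewrite /= inordK.
Qed.
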